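(* Let $X$ be a primitive distance-regular graph of diameter $d\geq 2$ on $n$ vertices with degree $k$, and let $\alpha>0$. Suppose that for some $1\leq j\leq d-1$ we have $b_j\geq\alpha k$ and $c_{j+1}\geq\alpha k$. Then $D_{\min}(X)\geq \frac{\alpha}{d}n$.
   Context: A connected graph $X$ of diameter $d$ is distance-regular if there are integers $a_i,b_i,c_i$ ($0\le i\le d$) such that for all vertices $v,w$ with $\mathrm{dist}(v,w)=i$, $w$ has exactly $c_i$ neighbours at distance $i-1$, $a_i$ at distance $i$, $b_i$ at distance $i+1$ from $v$; $X$ is $k$-regular with $k=b_0$. It is primitive if for every $1\le i\le d$ the distance-$i$ graph (same vertices, $u\sim v$ iff $\mathrm{dist}(u,v)=i$) is connected. A vertex $x$ distinguishes $u,v$ if $\mathrm{dist}(x,u)\neq\mathrm{dist}(x,v)$; $D(u,v)$ is the number of vertices distinguishing $u,v$, and $D_{\min}(X)=\min_{u\neq v}D(u,v)$. *)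

(* Defs.v *)
From HB Require Import structures.
From mathcomp Require Import all_boot all_order all_algebra.
Set Implicit Arguments. Unset Strict Implicit. Unset Printing Implicit Defensive.

Section Graphs.
Variable T : finType.
Variable e : rel T.

Definition simple_graph : Prop := symmetric e /\ irreflexive e.

Definition connected_rel (r : rel T) : Prop := forall x y, connect r x y.

Fixpoint dist_le (n : nat) (x y : T) : bool :=
  if n is m.+1 then dist_le m x y || [exists z, dist_le m x z && e z y]
  else x == y.

(* graph distance: least n with dist_le n x y; (if y is unreachable from x
   this returns #|T|, but it is only used for connected graphs, where all
   distances are < #|T|) *)
Definition dist (x y : T) : nat := find (fun n => dist_le n x y) (iota 0 #|T|).

Definition diameter : nat := \max_(x : T) \max_(y : T) dist x y.

Definition distance_regular (a b c : nat -> nat) : Prop :=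
  connected_rel e /\
  forall v w : T, let i := dist v w in
    [/\ #|[set u | e w u & dist v u == i.-1]| = (if i is 0 then 0 else c i),
        #|[set u | e w u & dist v u == i]| = a i
      & #|[set u | e w u & dist v u == i.+1]| = b i].

Definition dist_graph (i : nat) : rel T := [rel x y | dist x y == i].

Definition primitive : Prop :=
  forall i, 1 <= i <= diameter -> connected_rel (dist_graph i).

Definition Dist (u v : T) : nat := #|[set x | dist x u != dist x v]|.

Definition Dmin : nat :=
  \big[minn/#|T|]_(p : T * T | p.1 != p.2) Dist p.1 p.2.

End Graphs.

(* Main.v *)
Require Import Defs.
From HB Require Import structures.
From mathcomp Require Import all_boot all_order all_algebra.
From mathcomp Require Import zify ring.
Set Implicit Arguments. Unset Strict Implicit. Unset Printing Implicit Defensive.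

Section DRG.
Variable T : finType.
Variable e : rel T.
Variables a b c : nat -> nat.
Hypothesis Hsg : simple_graph e.
Hypothesis Hdr : distance_regular e a b c.

Let esym : symmetric e. Proof. by case: Hsg. Qed.
Let eirr : irreflexive e. Proof. by case: Hsg. Qed.
Let conn : connected_rel e. Proof. by case: Hdr. Qed.

Lemma dist_le_S n x y : dist_le e n x y -> dist_le e n.+1 x y.
Proof. by move=> h /=; rewrite h. Qed.

Lemma dist_le_mono n m x y : n <= m -> dist_le e n x y -> dist_le e m x y.
Proof.
move=> /subnKC <-; elim: (m - n) => [|k IH] h; first by rewrite addn0.
by rewrite addnS; apply: dist_le_S; apply: IH.
Qed.

Lemma dist_le_path x p : path e x p -> dist_le e (size p) x (last x p).
Proof.
elim/last_ind: p => [|p z IH] /=; first by rewrite eqxx.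
rewrite rcons_path size_rcons last_rcons => /andP [hp he] /=.
apply/orP; right; apply/existsP; exists (last x p); by rewrite IH.
Qed.

Lemma dist_le_exists x y : exists2 n, n < #|T| & dist_le e n x y.
Proof.
have /connectP [p hp ->] := conn x y.
case: (shortenP hp) => p' hp' hu _.
exists (size p'); last by apply: dist_le_path.
have := card_uniqP hu; rewrite /= => h.
by rewrite -ltnS; have := max_card (mem (x :: p')); rewrite h.
Qed.

Lemma dist_leE n x y : dist_le e n x y = (dist e x y <= n).
Proof.
have hlt : dist e x y < #|T|.
  have [m hm hd] := dist_le_exists x y.
  rewrite /dist; suff: has (fun n => dist_le e n x y) (iota 0 #|T|) by rewrite has_find size_iota.
  apply/hasP; exists m => //.
  by rewrite mem_iota.
have hd : dist_le e (dist e x y) x y.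
  have := nth_find 0 (a := fun n => dist_le e n x y) (s := iota 0 #|T|).
  rewrite has_find size_iota => /(_ hlt); by rewrite nth_iota.
apply/idP/idP => h; last by apply: dist_le_mono h hd.
case: (ltnP n #|T|) => hn; last by apply: ltnW; apply: leq_trans hn.
rewrite leqNgt; apply/negP => hlt2.
have := before_find 0 (a := fun n => dist_le e n x y) (s := iota 0 #|T|) hlt2.
by rewrite nth_iota // h.
Qed.

Lemma dist_lt x y : dist e x y < #|T|.
Proof. have [m hm hd] := dist_le_exists x y. by rewrite dist_leE in hd; apply: leq_ltn_trans hd hm. Qed.

Lemma dist0 x : dist e x x = 0.
Proof. by apply/eqP; rewrite -leqn0 -dist_leE /=. Qed.

Lemma dist0_eq x y : dist e x y = 0 -> x = y.
Proof. by move=> h; have := dist_leE 0 x y; rewrite h /= => /eqP. Qed.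

Lemma dist_edge x z y : e z y -> dist e x y <= (dist e x z).+1.
Proof.
move=> hzy; rewrite -dist_leE /=; apply/orP; right; apply/existsP; exists z.
by rewrite hzy dist_leE leqnn.
Qed.

Lemma dist_le_prepend n a0 b0 c0 : e a0 b0 -> dist_le e n b0 c0 -> dist_le e n.+1 a0 c0.
Proof.
move=> hab; elim: n c0 => [|n IH] c0 /=.
  move=> /eqP <-; apply/orP; right; apply/existsP; exists a0; by rewrite eqxx.
case/orP => [h|/existsP [z /andP [hz hzc]]].
  by apply/orP; left; apply: IH.
apply/orP; right; apply/existsP; exists z; apply/andP; split => //; exact: IH.
Qed.

Lemma dist_le_sym n x y : dist_le e n x y -> dist_le e n y x.
Proof.
elim: n x y => [|n IH] x y /=; first by rewrite eq_sym.
case/orP => [h|/existsP [z /andP [hz hzy]]]; first by apply/orP; left; apply: IH.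
by apply: dist_le_prepend (IH _ _ hz); rewrite esym.
Qed.

Lemma dist_sym x y : dist e x y = dist e y x.
Proof.
apply/eqP; rewrite eqn_leq -!dist_leE; apply/andP; split; apply: dist_le_sym;
  by rewrite dist_leE.
Qed.

Lemma dist_edge' x z y : e x z -> dist e x y <= (dist e z y).+1.
Proof. by move=> h; rewrite dist_sym (dist_sym z); apply: dist_edge; rewrite esym. Qed.

Lemma dist_pred x y s : dist e x y = s.+1 -> exists2 z, dist e x z = s & e z y.
Proof.
move=> h; have := dist_leE s.+1 x y; rewrite h leqnn /=.
case/orP => [|/existsP [z /andP [hz hzy]]]; first by rewrite dist_leE h ltnn.
exists z => //; apply/eqP; rewrite eqn_leq -dist_leE hz /=.
by have := dist_edge x hzy; rewrite h ltnS.
Qed.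

Lemma dist_adj x y : e x y -> dist e x y = 1.
Proof.
move=> h; have h1 : dist e x y <= 1 by have := dist_edge x h; rewrite dist0.
have h0 : dist e x y != 0.
  by apply/eqP => /dist0_eq hxy; move: h; rewrite hxy eirr.
by case: (dist e x y) h1 h0 => [|[|]].
Qed.


Lemma sum_ind (P Q : pred T) K :
  \sum_(w | P w) (Q w) * K = #|[set w | P w & Q w]| * K.
Proof.
rewrite -sum_nat_const big_mkcond [RHS]big_mkcond /=; apply: eq_bigr => w _.
by rewrite inE; case: (P w); case: (Q w); rewrite ?mul1n ?mul0n.
Qed.

Lemma pw_decomp (h : nat -> nat) m i : m <= i.+1 -> i <= m.+1 -> (i = 0 -> m != 0) ->
  h m = ((m == i.-1) && (0 < i)) * h i.-1 + (m == i) * h i + (m == i.+1) * h i.+1.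
Proof.
move=> h1 h2 h3.
case: (boolP (m == i.-1)) => /eqP e1; case: (boolP (m == i)) => /eqP e2;
case: (boolP (m == i.+1)) => /eqP e3; case: (boolP (0 < i)) => e4;
rewrite /= ?mul0n ?mul1n ?addn0 ?add0n;
first [ by rewrite e1 | by rewrite e2 | by rewrite e3 | exfalso; lia | idtac ].
Qed.

Lemma nbr_sum (h : nat -> nat) x z : let i := dist e z x in
  \sum_(w | e x w) h (dist e z w) =
  (if i is 0 then 0 else c i * h i.-1) + a i * h i + b i * h i.+1.
Proof.
move=> i; have [Hc Ha Hb] := (Hdr.2 z x).
rewrite -/i in Hc Ha Hb.
transitivity (\sum_(w | e x w) ((dist e z w == i.-1) && (0 < i)) * h i.-1 +
    \sum_(w | e x w) (dist e z w == i) * h i +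
    \sum_(w | e x w) (dist e z w == i.+1) * h i.+1).
  rewrite -!big_split /=; apply: eq_bigr => w hw; apply: pw_decomp.
  - by apply: dist_edge.
  - by apply: dist_edge; rewrite esym.
  - move=> /dist0_eq hzx; apply/eqP => /dist0_eq hzw.
    by move: hw; rewrite -hzx -hzw eirr.
rewrite !sum_ind Ha Hb; congr (_ + _ + _); clear Ha Hb.
move: Hc; rewrite /i; case: (dist e z x) => [|i'] Hc /=.
  rewrite (_ : [set w | e x w & (dist e z w == 0) && (0 < 0)] = set0) ?cards0 //.
  by apply/setP => w; rewrite !inE ltnn !andbF.
rewrite -Hc; congr muln; apply: eq_card => w; by rewrite !inE andbT.
Qed.

Lemma coef_id (i s : nat) :
  (if i is 0 then 0 else c i * (i.-1 == s)) + a i * (i == s) + b i * (i.+1 == s) =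
  (if s is s'.+1 then b s' * (i == s') else 0) + a s * (i == s) + c s.+1 * (i == s.+1).
Proof.
case: i => [|i]; case: s => [|s] /=; rewrite ?eqSS;
repeat (case: eqP => ? /=); subst; rewrite ?muln0 ?muln1 ?addn0 ?add0n //; lia.
Qed.

Definition inv (F : T -> T -> nat) :=
  forall x y x' y', dist e x y = dist e x' y' -> F x y = F x' y'.

Definition fof (F : T -> T -> nat) (t : nat) : nat :=
  if [pick p : T * T | dist e p.1 p.2 == t] is Some p then F p.1 p.2 else 0.

Lemma invE F : inv F -> forall x y, F x y = fof F (dist e x y).
Proof.
move=> hF x y; rewrite /fof; case: pickP => [p /eqP hp|/(_ (x, y))].
  by apply: hF; rewrite hp.
by rewrite /= eqxx.
Qed.

Definition P s (g : nat -> nat) x y := \sum_z (dist e x z == s) * g (dist e z y).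

Lemma P_rec s g x y : \sum_(w | e x w) P s g w y =
  (if s is s'.+1 then b s' * P s' g x y else 0) + a s * P s g x y + c s.+1 * P s.+1 g x y.
Proof.
rewrite /P exchange_big /=.
transitivity (\sum_z (\sum_(w | e x w) (dist e z w == s)) * g (dist e z y)).
  apply: eq_bigr => z _; rewrite big_distrl /=; apply: eq_bigr => w _.
  by rewrite dist_sym.
transitivity (\sum_z ((if s is s'.+1 then b s' * (dist e x z == s') else 0) +
   a s * (dist e x z == s) + c s.+1 * (dist e x z == s.+1)) * g (dist e z y)).
  apply: eq_bigr => z _; congr (_ * _).
  by rewrite (nbr_sum (fun t => (t == s) : nat)) coef_id dist_sym.
case: s => [|s] /=; rewrite ?add0n !big_distrr -!big_split /=; apply: eq_bigr => z _;
  by rewrite !mulnDl ?mul0n ?add0n !mulnA.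
Qed.

Lemma inv_nbr G : inv G -> inv (fun x y => \sum_(w | e x w) G w y).
Proof.
move=> hG x y x' y' hd /=.
have E : forall x y, \sum_(w | e x w) G w y = \sum_(w | e x w) fof G (dist e y w).
  by move=> u v; apply: eq_bigr => w _; rewrite (invE hG) dist_sym.
by rewrite !E !nbr_sum (dist_sym y) (dist_sym y') hd.
Qed.

Lemma P0 g x y : P 0 g x y = g (dist e x y).
Proof.
rewrite /P (bigD1 x) //= dist0 eqxx mul1n big1 ?addn0 // => z hz.
case: eqP => [/dist0_eq hxz|]; last by rewrite mul0n.
by move: hz; rewrite hxz eqxx.
Qed.

Lemma c_pos s x z : dist e x z = s.+1 -> 0 < c s.+1.
Proof.
move=> hd; have [Hc _ _] := Hdr.2 x z; rewrite hd /= in Hc.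
rewrite -Hc; have [u hu hz] := dist_pred hd.
by apply/card_gt0P; exists u; rewrite inE esym hz hu eqxx.
Qed.

Lemma P_zero s g x y : c s.+1 = 0 -> P s.+1 g x y = 0.
Proof.
move=> hc; rewrite /P big1 // => z _.
case: eqP => [hz|]; last by rewrite mul0n.
by have := c_pos hz; rewrite hc.
Qed.

Lemma P_step s g : (if s is s'.+1 then inv (P s' g) else True) -> inv (P s g) -> inv (P s.+1 g).
Proof.
move=> h1 h2 x y x' y' hd.
have L := P_rec s g x y; have L' := P_rec s g x' y'.
rewrite (inv_nbr h2 hd) in L.
have hb : (if s is s'.+1 then b s' * P s' g x y else 0) = (if s is s'.+1 then b s' * P s' g x' y' else 0).
  by case: s h1 {L L' h2} => [|s] // h1; rewrite (h1 _ _ _ _ hd).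
rewrite hb (h2 _ _ _ _ hd) L' in L; move/addnI: L => L.
case: (posnP (c s.+1)) => hc; first by rewrite !P_zero.
by apply/eqP; rewrite -(eqn_pmul2l hc) L.
Qed.

Lemma P_inv s g : inv (P s g).
Proof.
suff : inv (P s g) /\ inv (P s.+1 g) by case.
elim: s => [|s [IH1 IH2]].
  have h0 : inv (P 0 g) by move=> x y x' y' hd; rewrite !P0 hd.
  by split => //; apply: P_step.
by split => //; apply: P_step.
Qed.

Lemma sum_onehot N d (F : nat -> nat) : d < N -> \sum_(t < N) (d == t) * F t = F d.
Proof.
move=> hd; rewrite (bigD1 (Ordinal hd)) //= eqxx mul1n big1 ?addn0 // => t ht.
case: eqP => [hdt|]; last by rewrite mul0n.
by move: ht; rewrite (_ : t = Ordinal hd) ?eqxx //; apply: val_inj; rewrite /= hdt.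
Qed.

Lemma inv_sum N (F : nat -> T -> T -> nat) : (forall t, inv (F t)) ->
  inv (fun x y => \sum_(t < N) F t x y).
Proof. by move=> hF x y x' y' hd; apply: eq_bigr => t _; apply: hF. Qed.

Lemma Q_inv phi g : inv (fun x y => \sum_z phi (dist e x z) * g (dist e z y)).
Proof.
have E : forall x y, \sum_z phi (dist e x z) * g (dist e z y) =
   \sum_(t < #|T|) phi t * P t g x y.
  move=> x y; rewrite /P.
  under [RHS]eq_bigr do rewrite big_distrr /=.
  rewrite [RHS]exchange_big /=; apply: eq_bigr => z _.
  rewrite -(sum_onehot (fun t => phi t * g (dist e z y)) (dist_lt x z)).
  by apply: eq_bigr => t _; rewrite mulnCA.
move=> x y x' y' hd; rewrite !E.
by apply: (@inv_sum #|T| (fun t x y => phi t * P t g x y)) => // t u v u' v' h; rewrite (P_inv t g h).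
Qed.

Lemma Dist_inv : inv (Dist e).
Proof.
have E : forall x y, Dist e x y = #|T| - \sum_(t < #|T|) P t (fun u => (u == t) : nat) x y.
  move=> x y; rewrite /Dist.
  have -> : \sum_(t < #|T|) P t (fun u => (u == t) : nat) x y = #|[set z | dist e z x == dist e z y]|.
    rewrite /P exchange_big /=.
    transitivity (#|[set w | predT w & dist e w x == dist e w y]| * 1).
      rewrite -sum_ind /=; apply: eq_bigr => z _.
      rewrite muln1 (sum_onehot (fun t => (dist e z y == t) : nat) (dist_lt x z)).
      by rewrite (dist_sym z x) eq_sym.
    by rewrite muln1; apply: eq_card => z; rewrite !inE.
  rewrite -(cardsC [set z | dist e z x == dist e z y]) addKn.
  by apply: eq_card => z; rewrite !inE.
move=> x y x' y' hd; rewrite !E; congr (_ - _).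
by apply: (@inv_sum #|T| (fun t => P t (fun u => (u == t) : nat))) => // t; apply: P_inv.
Qed.

Fixpoint Rw (i m : nat) (x y : T) : nat :=
  if m is m'.+1 then Rw i m' x y + \sum_z Rw i m' x z * (dist e z y == i)
  else (x == y).

Lemma R_inv i m : inv (Rw i m).
Proof.
elim: m => [|m IH] x y x' y' hd /=.
  suff -> : (x == y) = (x' == y') by [].
  by apply/eqP/eqP => h; apply: dist0_eq; [rewrite -hd h dist0 | rewrite hd h dist0].
rewrite (IH _ _ _ _ hd); congr (_ + _).
have E : forall u v, \sum_z Rw i m u z * (dist e z v == i) =
   \sum_z fof (Rw i m) (dist e u z) * (fun t => (t == i) : nat) (dist e z v).
  by move=> u v; apply: eq_bigr => z _; rewrite (invE IH).
by rewrite !E; apply: (Q_inv (fof (Rw i m)) (fun t => (t == i) : nat) hd).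
Qed.

Lemma R_succ_pos i m x y :
  (0 < Rw i m.+1 x y) = (0 < Rw i m x y) || [exists z, (0 < Rw i m x z) && (dist e z y == i)].
Proof.
rewrite /= addn_gt0; congr (_ || _).
rewrite lt0n sum_nat_eq0 negb_forall; apply/existsP/existsP => [[z]|[z /andP [h1 h2]]].
  by rewrite -lt0n muln_gt0 => /andP [h1 h2]; exists z; rewrite h1 /=; case: eqP h2.
by exists z; rewrite -lt0n muln_gt0 h1 h2.
Qed.

Lemma Dist_tri x z y : Dist e x y <= Dist e x z + Dist e z y.
Proof.
rewrite /Dist; apply: leq_trans (leq_card_setU _ _); apply: subset_leq_card.
apply/subsetP => w; rewrite !inE; case: (eqVneq (dist e w x) (dist e w z)) => //= h1.
by rewrite h1.
Qed.

Lemma R_Dist i m u v x y : dist e u v = i -> 0 < Rw i m x y -> Dist e x y <= m * Dist e u v.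
Proof.
move=> huv; elim: m y => [|m IH] y /=.
  by rewrite lt0n eqb0 negbK => /eqP <-; rewrite /Dist leqn0 cards_eq0; apply/eqP/setP => w; rewrite !inE eqxx.
move=> h; have : 0 < Rw i m.+1 x y by []. 
rewrite R_succ_pos => /orP [h1|/existsP [z /andP [h1 /eqP h2]]].
  by apply: leq_trans (IH _ h1) _; rewrite leq_mul2r leqnSn orbT.
apply: leq_trans (Dist_tri x z y) _; rewrite mulSn [X in _ <= X]addnC; apply: leq_add.
  exact: IH.
by rewrite (@Dist_inv z y u v) // h2 huv.
Qed.

Lemma R_connect i x y : connect (dist_graph e i) x y -> exists m, 0 < Rw i m x y.
Proof.
move=> /connectP [p hp ->] {y}.
elim/last_ind: p hp => [|p z IH] /=; first by exists 0; rewrite /= eqxx.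
rewrite rcons_path last_rcons => /andP [hp hz]; have [m hm] := IH hp.
exists m.+1; rewrite R_succ_pos; apply/orP; right; apply/existsP; exists (last x p).
by rewrite hm.
Qed.

Lemma dist_diam x y : dist e x y <= diameter e.
Proof.
apply: leq_trans (leq_bigmax x); exact: (leq_bigmax (F := fun y => dist e x y) y).
Qed.

Section Reach.
Variable i : nat.
Let N := (diameter e).+1.
Definition S m : {set 'I_N} := [set t : 'I_N | 0 < fof (Rw i m) t].

Lemma dist_ord x y : dist e x y < N.
Proof. by rewrite ltnS dist_diam. Qed.

Lemma S_pos m x y : (0 < Rw i m x y) = (Ordinal (dist_ord x y) \in S m).
Proof. by rewrite inE /= -(invE (@R_inv i m)). Qed.

Lemma S_mono m : S m \subset S m.+1.
Proof.
apply/subsetP => t; rewrite !inE /fof; case: pickP => // p _ h.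
by apply: leq_trans h _; rewrite /= leq_addr.
Qed.

Lemma S_monoW m k : m <= k -> S m \subset S k.
Proof.
move=> /subnKC <-; elim: (k - m) => [|n IH]; first by rewrite addn0.
by apply: subset_trans IH _; rewrite addnS; apply: S_mono.
Qed.

Lemma S_eq_pos m : S m = S m.+1 -> forall x y, (0 < Rw i m x y) = (0 < Rw i m.+1 x y).
Proof. by move=> h x y; rewrite !S_pos h. Qed.

Lemma S_stable m : S m = S m.+1 -> S m.+1 = S m.+2.
Proof.
move=> h; have hp := S_eq_pos h.
apply/setP => t; rewrite !inE /fof; case: pickP => // p _.
rewrite [LHS](R_succ_pos i m) [RHS](R_succ_pos i m.+1); congr (_ || _); first exact: hp.
by apply: eq_existsb => z; rewrite hp.
Qed.

Lemma S_stableW m k : S m = S m.+1 -> S (m + k) = S m.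
Proof.
move=> h; elim: k => [|k IH]; first by rewrite addn0.
have h' : forall n, S (m + n) = S (m + n).+1.
  elim=> [|n IHn]; first by rewrite addn0.
  by rewrite addnS; apply: S_stable.
by rewrite addnS -h' IH.
Qed.

Lemma S0 (x : T) : ord0 \in S 0.
Proof.
have := S_pos 0 x x; rewrite /= eqxx /=.
by rewrite (_ : Ordinal (dist_ord x x) = ord0) //; apply: val_inj; rewrite /= dist0.
Qed.

Lemma S_grow w w' : primitive e -> 1 <= i <= diameter e -> dist e w w' = 1 ->
  0 < Rw i (diameter e) w w'.
Proof.
move=> hprim hi hww.
have h1 : 1 < N by rewrite /N ltnS; case/andP: hi; apply: leq_trans.
pose one := Ordinal h1.
have [M hM] := R_connect (hprim i hi w w').
have oneM : one \in S M.
  rewrite S_pos in hM; by rewrite (_ : one = Ordinal (dist_ord w w')) //; apply: val_inj; rewrite /= hww.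
suff : one \in S (diameter e).
  rewrite inE; rewrite (invE (@R_inv i _) w w') hww; by [].
apply/negPn/negP => /negP hn.
have strict : forall m, m < diameter e -> S m \proper S m.+1.
  move=> m hm; rewrite properEneq S_mono andbT; apply/eqP => hS.
  apply: hn; case: (leqP M m) => hMm.
    by apply: (subsetP (S_monoW (ltnW hm))); apply: (subsetP (S_monoW hMm)).
  have := S_stableW (M - m) hS; rewrite subnKC ?(ltnW hMm) // => hSM.
  by apply: (subsetP (S_monoW (ltnW hm))); rewrite -hSM.
have card : forall m, m <= diameter e -> m < #|S m|.
  elim=> [|m IH] hm; first by apply/card_gt0P; exists ord0; apply: (S0 w).
  by apply: leq_trans (proper_card (strict m hm)); rewrite ltnS IH // ltnW.
have := card _ (leqnn (diameter e)).
rewrite -[X in X < _]/(N.-1) => hc.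
have : S (diameter e) = setT.
  apply/eqP; rewrite eqEcard subsetT cardsT card_ord /=; exact: hc.
by move=> hT; apply: hn; rewrite hT inE.
Qed.
End Reach.

Lemma dist_descend x n y : dist e x y = n -> forall t, t <= n -> exists y', dist e x y' = t.
Proof.
elim: n y => [|n IH] y hy t ht; first by exists y; move: ht; rewrite leqn0 => /eqP ->.
rewrite leq_eqVlt in ht; case/orP: ht => [/eqP ->|ht]; first by exists y.
have [z hz _] := dist_pred hy; exact: IH hz t ht.
Qed.

Lemma realize (w : T) t : t <= diameter e -> exists v y, dist e v y = t.
Proof.
have hT : 0 < #|T| by apply/card_gt0P; exists w.
have [x0 hx0] := eq_bigmax (fun x => \max_y dist e x y) hT.
have [y0 hy0] := eq_bigmax (fun y => dist e x0 y) hT.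
move=> ht; have ht' : t <= dist e x0 y0 by rewrite -hy0 -hx0.
have [y hy] := dist_descend (x := x0) (y := y0) erefl ht'; by exists x0, y.
Qed.

Lemma geo_nbr v y t : dist e v y = t.+1 -> exists2 v', e v v' & dist e v' y = t.
Proof.
move=> h; rewrite dist_sym in h; have [z hz hzv] := dist_pred h.
by exists z; [rewrite esym | rewrite dist_sym].
Qed.

Lemma b_mono (w : T) t : t.+1 <= diameter e -> b t.+1 <= b t.
Proof.
move=> ht; have [v [y hvy]] := realize w ht.
have [v' hvv' hv'y] := geo_nbr hvy.
have [_ _ Hb1] := Hdr.2 v y; have [_ _ Hb0] := Hdr.2 v' y.
rewrite hvy in Hb1; rewrite hv'y in Hb0.
rewrite -Hb1 -Hb0; apply: subset_leq_card; apply/subsetP => u; rewrite !inE.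
case/andP => hyu /eqP hvu; rewrite hyu /=.
have h1 := dist_edge v' hyu; have h2 := dist_edge' u hvv'.
rewrite hv'y in h1; rewrite hvu in h2; apply/eqP; apply/eqP; rewrite eqn_leq h1 /=.
by rewrite -ltnS.
Qed.

Lemma c_mono (w : T) t : 1 <= t -> t.+1 <= diameter e -> c t <= c t.+1.
Proof.
move=> h1t ht; have [v [y hvy]] := realize w ht.
have [v' hvv' hv'y] := geo_nbr hvy.
have [Hc1 _ _] := Hdr.2 v y; have [Hc0 _ _] := Hdr.2 v' y.
rewrite hvy /= in Hc1; rewrite hv'y in Hc0.
case: t h1t ht hvy hv'y Hc1 Hc0 => // t _ ht hvy hv'y Hc1 Hc0 /=.
rewrite -Hc1 -Hc0; apply: subset_leq_card; apply/subsetP => u; rewrite !inE.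
case/andP => hyu /eqP hvu; rewrite hyu /=.
have h1 := dist_edge' u hvv'; rewrite hvu in h1.
have h2 := dist_edge v (y := y) (z := u); rewrite esym hyu hvy in h2.
by apply/eqP; apply/eqP; rewrite eqn_leq h1 -ltnS h2.
Qed.

Lemma b_chain (w : T) s t : s <= t -> t <= diameter e -> b t <= b s.
Proof.
move=> /subnKC <-; elim: (t - s) => [|k IH] hk; first by rewrite addn0.
rewrite addnS in hk *; apply: leq_trans (b_mono w hk) _; apply: IH; exact: ltnW.
Qed.

Lemma c_chain (w : T) s t : 1 <= s -> s <= t -> t <= diameter e -> c s <= c t.
Proof.
move=> hs /subnKC <-; elim: (t - s) => [|k IH] hk; first by rewrite addn0.
rewrite addnS in hk *; apply: leq_trans (c_mono w _ hk); first by apply: IH; exact: ltnW.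
by apply: leq_trans hs (leq_addr _ _).
Qed.

Lemma stepA w w' j : e w w' -> j.+1 <= diameter e ->
  #|T| * minn (b j) (c j.+1) <= b 0 * Dist e w w'.
Proof.
move=> hww hj.
have E1 : \sum_(u | e w u) Dist e w u = b 0 * Dist e w w'.
  transitivity (\sum_(u | e w u) (predT u : bool) * Dist e w w').
    apply: eq_bigr => u hu; rewrite mul1n; apply: Dist_inv.
    by rewrite !dist_adj.
  rewrite sum_ind; congr (_ * _).
  have [_ _ Hb] := Hdr.2 w w; rewrite dist0 in Hb; rewrite -Hb.
  by apply: eq_card => u; rewrite !inE andbT; case h: (e w u); rewrite //= dist_adj.
have E2 : \sum_(u | e w u) Dist e w u =
          \sum_x #|[set u | e w u & dist e x w != dist e x u]|.
  transitivity (\sum_(u | e w u) \sum_x (dist e x w != dist e x u) * 1).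
    apply: eq_bigr => u _; rewrite /Dist sum_ind muln1.
    by apply: eq_card => x; rewrite !inE.
  rewrite exchange_big /=; apply: eq_bigr => x _.
  by rewrite sum_ind muln1.
rewrite -E1 E2 -sum_nat_const; apply: leq_sum => x _.
set s := dist e x w.
have [Hc _ Hb] := Hdr.2 x w; rewrite -/s in Hc Hb.
case: (leqP s j) => hs.
  apply: leq_trans (geq_minl _ _) _; apply: leq_trans (b_chain w hs (ltnW hj)) _.
  rewrite -Hb; apply: subset_leq_card; apply/subsetP => u; rewrite !inE.
  case/andP => -> /eqP ->; by rewrite neq_ltn ltnSn.
apply: leq_trans (geq_minr _ _) _.
apply: leq_trans (c_chain w (ltn0Sn _) hs (dist_diam x w)) _.
clear Hb; move: Hc hs; rewrite /s; case: (dist e x w) => [//|s'] Hc hs.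
rewrite -Hc; apply: subset_leq_card; apply/subsetP => u; rewrite !inE.
case/andP => -> /eqP ->; by rewrite /= neq_ltn ltnSn orbT.
Qed.
End DRG.

Import Order.TTheory GRing.Theory Num.Theory.
Local Open Scope ring_scope.

Theorem proposition4p8 (R : realFieldType) (T : finType) (e : rel T)
    (a b c : nat -> nat) (alpha : R) (j : nat) :
  simple_graph e ->
  distance_regular e a b c ->
  primitive e ->
  (2 <= diameter e)%N ->
  0 < alpha ->
  (1 <= j <= (diameter e).-1)%N ->
  alpha * (b 0%N)%:R <= (b j)%:R ->
  alpha * (b 0%N)%:R <= (c j.+1)%:R ->
  alpha / (diameter e)%:R * #|T|%:R <= (Dmin e)%:R.
Proof.
move=> Hsg Hdr Hprim Hd2 Ha Hj Hbj Hcj.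
set d := diameter e.
have hd0 : (0 < d)%N by apply: leq_trans Hd2.
have [w _ | h0] := pickP (@predT T); last first.
  by move: Hd2; rewrite /diameter big_pred0.
have [v [y hvy]] := realize Hdr w (t := 1) hd0.
have [z hz hzy] := dist_pred Hdr hvy; have hzv := dist0_eq Hdr hz.
rewrite -hzv in hzy; clear w; move: hzy; clear hz hvy hzv z => hww.
rename v into w; rename y into w'.
have hjd : (j.+1 <= d)%N.
  case/andP: Hj => _ hj; by rewrite -ltnS prednK in hj.
have hA := stepA Hsg Hdr hww hjd.
have hk : (0 < b 0)%N.
  have [_ _ Hb] := Hdr.2 w w; rewrite (dist0 Hdr) in Hb; rewrite -Hb.
  by apply/card_gt0P; exists w'; rewrite inE hww (dist_adj Hsg Hdr hww).
have hmin : alpha * (b 0)%:R <= (minn (b j) (c j.+1))%:R.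
  by rewrite /minn; case: ifP.
have key : forall u v, u != v -> alpha / d%:R * #|T|%:R <= (Dist e u v)%:R.
  move=> u u' huv; set i := dist e u u'.
  have hi : (1 <= i <= d)%N.
    rewrite dist_diam // andbT lt0n; apply/negP => /eqP /(dist0_eq Hdr) h.
    by rewrite h eqxx in huv.
  have hR := S_grow Hsg Hdr Hprim hi (dist_adj Hsg Hdr hww).
  have hD := R_Dist Hsg Hdr (u := u) (v := u') erefl hR.
  have hdR : (0 : R) < d%:R by rewrite ltr0n.
  have hkR : (0 : R) < (b 0)%:R by rewrite ltr0n.
  rewrite mulrAC ler_pdivrMr // -(ler_pM2l hkR).
  apply: le_trans (_ : (b 0)%:R * (Dist e w w')%:R <= _).
    apply: le_trans (_ : #|T|%:R * (minn (b j) (c j.+1))%:R <= _); last first.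
      by rewrite -!natrM ler_nat.
    rewrite (_ : (b 0)%:R * (alpha * #|T|%:R) = #|T|%:R * (alpha * (b 0)%:R)); last by ring.
    by apply: ler_wpM2l => //; rewrite ler0n.
  rewrite -!natrM ler_nat leq_mul2l; apply/orP; right; by rewrite mulnC.
rewrite /Dmin; apply: (big_ind (fun m : nat => alpha / d%:R * #|T|%:R <= m%:R)).
- apply: le_trans (key w w' _) _.
    by apply/eqP => h; move: hww; rewrite h (proj2 Hsg).
  by rewrite ler_nat /Dist max_card.
- by move=> x1 x2 h1 h2; rewrite /minn; case: ifP.
- by move=> [p1 p2] /= hp; apply: key.
Qed.
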